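(* Fix $\Gamma$ and a set $\Lambda$ with $\Lambda\setminus\Gamma\ne\emptyset$, and let $\lambda=\min(\Lambda\setminus\Gamma)-v_0$. Let $\alpha\in N_\Lambda$ with $\Lambda_\alpha=\Lambda$. Then for every integer $k>\lambda$, $$N_\Lambda^k\cap\big(j^k(\alpha)+\widetilde T_k(\alpha)\big)=\{j^k(\alpha)\},$$ where $N^k_\Lambda=\{j^k(\psi):\psi\in N_\Lambda\}$ and $\widetilde T_k(\alpha)=\{j^k\big(x'(t)\epsilon+\alpha^*(g),\ y'(t)\epsilon+\alpha^*(h)\big):\epsilon\in\mathcal M_1^2,\ g\in\langle X^2,Y\rangle,\ h\in\mathcal M_2^2\}$ for $j^k(\alpha)=(x(t),y(t))$ (the tangent space at $j^k(\alpha)$ to its orbit under the group of $k$-jets of $\widetilde{\mathcal A}$).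
   Context: $\mathcal O_1=\mathbb C\{t\}$, $\mathcal O_2=\mathbb C\{X,Y\}$ with maximal ideals $\mathcal M_1,\mathcal M_2$; $\alpha^*(h)=h(x(t),y(t))$; $j^k$ is truncation modulo $t^{k+1}$. $\Gamma$ is the semigroup of values of a plane branch with minimal generators $v_0<v_1<\cdots<v_g$ and conductor $c$; $\Sigma_\Gamma$ is the set of Puiseux parametrizations $(t^{v_0},t^{v_1}+\sum_{v_1<i<c}a_it^i)$ (primitive, $v_0\nmid v_1$) with semigroup of values $\Gamma$. For a primitive parametrization $\varphi$ and $\omega=h\,dX+g\,dY$, $v_\varphi(\omega)=\mathrm{ord}_t(h(\varphi)x'+g(\varphi)y')+1$, and $\Lambda_\varphi$ is the set of these values over forms with nonzero pull-back. $N_\Lambda=\{(t^{v_0},t^{v_1}+t^\lambda+\sum_{j>\lambda}a_jt^j)\in\Sigma_\Gamma:\ a_j=0\text{ whenever }j+v_0\in\Lambda\}$. *)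

(* Defs.v *)
From HB Require Import structures.
From mathcomp Require Import all_boot all_order all_algebra.
Set Implicit Arguments. Unset Strict Implicit. Unset Printing Implicit Defensive.
Import Order.TTheory GRing.Theory Num.Theory.
Local Open Scope ring_scope.

Section Defs.
Variable K : numClosedFieldType.

(* order in t of a one-variable (polynomial) series: index of the first
   nonzero coefficient (meaningful for p != 0) *)
Definition ordt (p : {poly K}) : nat := find (fun a : K => a != 0) p.

(* bivariate polynomials in X, Y: outer variable Y, inner variable X;
   the coefficient of X^i Y^j in h is (h`_j)`_i *)
Definition eval2 (h : {poly {poly K}}) (x y : {poly K}) : {poly K} :=
  (map_poly (fun p : {poly K} => p \Po x) h).[y].

Definition varX : {poly {poly K}} := ('X : {poly K})%:P.
Definition varY : {poly {poly K}} := 'X.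

Definition jet (k : nat) (p : {poly K}) : {poly K} := take_poly k.+1 p.
Definition jet2 (k : nat) (a : {poly K} * {poly K}) :=
  (jet k a.1, jet k a.2).

Definition semigroup_values (x y : {poly K}) (n : nat) : Prop :=
  exists h : {poly {poly K}}, eval2 h x y != 0 /\ ordt (eval2 h x y) = n.

(* Lambda_phi : values of differential forms h dX + g dY *)
Definition Lambda_of (a : {poly K} * {poly K}) (n : nat) : Prop :=
  exists h g : {poly {poly K}},
    let w := eval2 h a.1 a.2 * a.1^`() + eval2 g a.1 a.2 * a.2^`() in
    w != 0 /\ n = (ordt w).+1.

Definition in_Sigma (Gamma : nat -> Prop) (v0 v1 c : nat)
  (a : {poly K} * {poly K}) : Prop :=
  [/\ a.1 = 'X^v0,
      (forall i, (a.2 - 'X^v1)`_i != 0 -> (v1 < i < c)%N),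
      ~~ (v0 %| v1)%N &
      (forall n, semigroup_values a.1 a.2 n <-> Gamma n)].

(* N_Lambda, with lam = min(Lambda \ Gamma) - v0 *)
Definition in_N (Gamma Lambda : nat -> Prop) (v0 v1 c lam : nat)
  (a : {poly K} * {poly K}) : Prop :=
  in_Sigma Gamma v0 v1 c a /\
  exists r : {poly K},
    [/\ a.2 = 'X^v1 + 'X^lam + r,
        (forall j, (j <= lam)%N -> r`_j = 0) &
        (forall j, Lambda (j + v0)%N -> r`_j = 0)].

Definition in_Nk (Gamma Lambda : nat -> Prop) (v0 v1 c lam k : nat)
  (J : {poly K} * {poly K}) : Prop :=
  exists psi, in_N Gamma Lambda v0 v1 c lam psi /\ J = jet2 k psi.

Definition in_X2Y (g : {poly {poly K}}) : Prop :=
  exists a b : {poly {poly K}}, g = a * varX ^+ 2 + b * varY.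
Definition in_M2sq (h : {poly {poly K}}) : Prop :=
  forall i j : nat, (i + j < 2)%N -> (h`_j)`_i = 0.

Definition Ttilde (k : nat) (alpha : {poly K} * {poly K})
  (V : {poly K} * {poly K}) : Prop :=
  let x := jet k alpha.1 in let y := jet k alpha.2 in
  exists (eps : {poly K}) (g h : {poly {poly K}}),
    [/\ eps`_0 = 0, eps`_1 = 0, in_X2Y g, in_M2sq h &
        V = (jet k (x^`() * eps + eval2 g x y),
             jet k (y^`() * eps + eval2 h x y))].

End Defs.

Definition first_gen (Gamma : nat -> Prop) (v0 : nat) : Prop :=
  [/\ Gamma v0, (0 < v0)%N & forall n, Gamma n -> (0 < n)%N -> (v0 <= n)%N].
Definition second_gen (Gamma : nat -> Prop) (v0 v1 : nat) : Prop :=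
  [/\ Gamma v1, ~~ (v0 %| v1)%N &
      forall n, Gamma n -> ~~ (v0 %| n)%N -> (v1 <= n)%N].
Definition conductor (Gamma : nat -> Prop) (c : nat) : Prop :=
  (forall n, (c <= n)%N -> Gamma n) /\
  (forall c', (forall n, (c' <= n)%N -> Gamma n) -> (c <= c')%N).
Definition is_min (P : nat -> Prop) (m : nat) : Prop :=
  P m /\ forall n, P n -> (m <= n)%N.

(* Main.v *)
Require Import Defs.
From HB Require Import structures.
From mathcomp Require Import all_boot all_order all_algebra.
Import GRing.Theory Num.Theory.
Set Implicit Arguments. Unset Strict Implicit.
Local Open Scope ring_scope.

Lemma evalXY (K : fieldType) (f : {rmorphism {poly K} -> {poly K}}) (a b : {poly {poly K}}) (Y : {poly K}) :
  (map_poly f (a * ('X%:P) ^+ 2 + b * 'X)).[Y] = (map_poly f a).[Y] * (f 'X) ^+ 2 + (map_poly f b).[Y] * Y.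
Proof.
have mD := (map_poly_is_nmod_morphism f).2.
have mM := (map_poly_is_monoid_morphism f).2.
rewrite !expr2 mD !mM map_polyC map_polyX.
by rewrite hornerD !hornerM hornerC hornerX.
Qed.

Section H.
Variable K : numClosedFieldType.
Implicit Types p q a b c d : {poly K}.

Definition dvX (n : nat) p := forall i, (i < n)%N -> p`_i = 0.
Definition cg n a b := dvX n (a - b).

Lemma dvX_le m n p : (n <= m)%N -> dvX m p -> dvX n p.
Proof. move=> le h i hi; apply: h; exact: leq_trans hi le. Qed.

Lemma dvX_add n p q : dvX n p -> dvX n q -> dvX n (p + q).
Proof. by move=> hp hq i hi; rewrite coefD hp ?hq ?addr0. Qed.

Lemma dvX_opp n p : dvX n p -> dvX n (- p).
Proof. by move=> hp i hi; rewrite coefN hp ?oppr0. Qed.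

Lemma dvX_mul m n p q : dvX m p -> dvX n q -> dvX (m + n) (p * q).
Proof.
move=> hp hq i hi; rewrite coefM big1 // => [[l hl]] _ /=.
case: (ltnP l m) => hlm; first by rewrite hp ?mul0r.
rewrite hq ?mulr0 //.
rewrite ltn_subLR; last by rewrite -ltnS.
by apply: leq_trans hi _; rewrite leq_add2r.
Qed.

Lemma dvX_mull n c p : dvX n p -> dvX n (c * p).
Proof. by move=> h; apply: (@dvX_mul 0 n c p) h. Qed.

Lemma cg_refl n a : cg n a a.
Proof. by rewrite /cg subrr => i _; rewrite coef0. Qed.

Lemma cg_sym n a b : cg n a b -> cg n b a.
Proof. by move=> h; rewrite /cg -opprB; apply: dvX_opp. Qed.

Lemma cg_trans n a b c : cg n a b -> cg n b c -> cg n a c.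
Proof. by move=> h1 h2; have := dvX_add h1 h2; rewrite addrA subrK. Qed.

Lemma cg_add n a b c d : cg n a b -> cg n c d -> cg n (a + c) (b + d).
Proof. by move=> h1 h2; have := dvX_add h1 h2; rewrite /cg opprD addrACA. Qed.

Lemma cg_opp n a b : cg n a b -> cg n (- a) (- b).
Proof. by move=> h; have := dvX_opp h; rewrite /cg opprB opprK addrC. Qed.

Lemma cg_mull m n c a b : dvX m c -> cg n a b -> cg (m + n) (c * a) (c * b).
Proof. by move=> h1 h2; have := dvX_mul h1 h2; rewrite /cg mulrBr. Qed.

Lemma cg_le m n a b : (n <= m)%N -> cg m a b -> cg n a b.
Proof. exact: dvX_le. Qed.

Lemma cg_dvX n a b : dvX n (a - b) -> cg n a b.
Proof. by []. Qed.

Lemma dvX_cg0 n a b : dvX n b -> cg n (a + b) a.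
Proof. by move=> h; rewrite /cg addrC addKr. Qed.

Lemma jet_cg k p : cg k.+1 p (jet k p).
Proof. by move=> i hi; rewrite coefB /jet coef_take_poly hi subrr. Qed.

Lemma jet_coef k p i : (i < k.+1)%N -> (jet k p)`_i = p`_i.
Proof. by move=> hi; rewrite /jet coef_take_poly hi. Qed.

Lemma dvX_deriv n p : dvX n p -> dvX n.-1 p^`().
Proof.
move=> h i hi; rewrite coef_deriv h ?mul0rn //.
by case: n h hi.
Qed.

Lemma cg_deriv n a b : cg n a b -> cg n.-1 a^`() b^`().
Proof. by move=> h; have := dvX_deriv h; rewrite derivB. Qed.

Lemma horner_cg n y Y (p : {poly {poly K}}) : cg n y Y -> cg n p.[y] p.[Y].
Proof.
move=> h; elim/poly_ind: p => [|q c IH]; first by rewrite !horner0; exact: cg_refl.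
rewrite !hornerMXaddC; apply: cg_add; last exact: cg_refl.
have -> : q.[y] * y = q.[y] * y - q.[Y] * y + q.[Y] * y by rewrite subrK.
have -> : q.[Y] * Y = 0 + q.[Y] * Y by rewrite add0r.
apply: cg_add; first by rewrite /cg subr0 -mulrBl mulrC; apply: (@dvX_mull n y).
exact: (@cg_mull 0 n).
Qed.

Lemma ordtP p : p != 0 -> p`_(ordt p) != 0 /\ forall i, (i < ordt p)%N -> p`_i = 0.
Proof.
move=> pn0.
have hh : has (fun a : K => a != 0) p.
  apply/hasP; exists (lead_coef p); last by rewrite lead_coef_eq0.
  by apply: mem_nth; rewrite prednK // size_poly_gt0.
split; first exact: (nth_find 0 hh).
by move=> i hi; have := before_find 0 hi => /negbFE/eqP.
Qed.

Lemma ordt_eq p n : p`_n != 0 -> (forall i, (i < n)%N -> p`_i = 0) -> ordt p = n.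
Proof.
move=> hn hb.
have pn0 : p != 0 by apply: contraNneq hn => ->; rewrite coef0.
have [h1 h2] := ordtP pn0.
case: (ltngtP (ordt p) n) => // hc.
  by move: h1; rewrite hb ?eqxx.
by move: hn; rewrite h2 ?eqxx.
Qed.

End H.
Theorem lemma5p2 (K : numClosedFieldType) (Gamma Lambda : nat -> Prop)
  (v0 v1 c : nat)
  (hv0 : first_gen Gamma v0) (hv1 : second_gen Gamma v0 v1)
  (hc : conductor Gamma c)
  (hne : exists n, Lambda n /\ ~ Gamma n)
  (m lam : nat) (hm : is_min (fun n => Lambda n /\ ~ Gamma n) m)
  (hlam : lam = (m - v0)%N)
  (alpha : {poly K} * {poly K})
  (halpha : in_N Gamma Lambda v0 v1 c lam alpha)
  (hLa : forall n, Lambda_of alpha n <-> Lambda n)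
  (k : nat) (hk : (lam < k)%N) :
  forall J : {poly K} * {poly K},
    (in_Nk Gamma Lambda v0 v1 c lam k J /\
     exists V, Ttilde k alpha V /\
               J = ((jet2 k alpha).1 + V.1, (jet2 k alpha).2 + V.2))
    <-> J = jet2 k alpha.
Proof.
move=> J; split; last first.
  move->; split; first by exists alpha.
  exists (0, 0); split; last by rewrite /= !addr0.
  have e0 : forall x y : {poly K}, eval2 0 x y = 0 by move=> x y; rewrite /eval2 map_poly0 horner0.
  exists 0, 0, 0; split; rewrite ?coef0 //.
  - by exists 0, 0; rewrite !mul0r addr0.
  - by move=> i j _; rewrite !coef0.
  - by rewrite !e0 !mulr0 !addr0 /jet take_poly0r.
case=> [[psi [hpsi ->]] [V [hV hJ]]].
case: halpha => [[ha1 ha2 _ _] [ra [hY hra1 hra2]]].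
case: hpsi => [[hp1 _ _ _] [rp [hP hrp1 hrp2]]].
case: hv0 => [_ v0pos v0min]; case: hv1 => [Gv1 ndiv _].
have v1pos : (0 < v1)%N by rewrite lt0n; apply: contraNneq ndiv => ->; rewrite dvdn0.
have v0v1 : (v0 <= v1)%N by apply: v0min.
have v1lam : (v1 < lam)%N.
  have := ha2 lam; rewrite hY -['X^v1 + _ + ra]addrA addrAC subrr add0r coefD coefXn eqxx hra1 // addr0.
  by move/(_ (oner_neq0 _)) => /andP[].
have v0k : (v0 < k)%N by apply: leq_ltn_trans v0v1 (ltn_trans v1lam hk).
set Y := alpha.2 in hY ha2 *.
case: hV => eps [g [h [_ _ hg _ hVe]]].
rewrite hVe /= in hJ.
set x := jet k alpha.1 in hJ.
set y := jet k Y in hJ.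
have hx : x = 'X^v0 by rewrite /x ha1 /jet take_poly_id // size_polyXn ltnW.
rewrite hx in hJ.
set xp := ('X^v0 : {poly K})^`() in hJ.
set yp := y^`() in hJ.
set Gy := eval2 g 'X^v0 y in hJ.
set Hy := eval2 h 'X^v0 y in hJ.
set D := jet k (yp * eps + Hy) in hJ.
case: hJ => hJ1 hJ2.
have e1 : jet k psi.1 = jet k alpha.1 by rewrite hp1 ha1.
have hpx : jet k psi.1 = 'X^v0 by rewrite hp1 /jet take_poly_id // size_polyXn ltnW.
have hV1 : jet k (xp * eps + Gy) = 0.
  by apply: (addrI 'X^v0); rewrite addr0 -hJ1 hpx.
rewrite /jet2 /= e1; congr pair.
rewrite hJ2 -/y; case: (eqVneq D 0) => [->|nD]; first by rewrite addr0.
exfalso.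
have [hDj hDb] := ordtP nD.
set j := ordt D in hDj hDb.
have jk : (j < k.+1)%N.
  case: (ltnP j k.+1) => // hj; move: hDj; rewrite /D /jet coef_take_poly ltnNge hj /= eqxx //.
have C1 : dvX k.+1 (xp * eps + Gy) by have := @jet_cg K k (xp * eps + Gy); rewrite hV1 /cg subr0.
have C2 : cg k.+1 D (yp * eps + Hy) := cg_sym (@jet_cg K k _).
have C3 : cg k.+1 y Y := cg_sym (@jet_cg K k _).
set HY := eval2 h 'X^v0 Y.
set GY := eval2 g 'X^v0 Y.
have C4 : cg k.+1 Hy HY := horner_cg (map_poly (fun p : {poly K} => p \Po 'X^v0) h) C3.
have C5 : cg k.+1 Gy GY := horner_cg (map_poly (fun p : {poly K} => p \Po 'X^v0) g) C3.
have C6 : cg k yp Y^`() := cg_deriv C3.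
have dXv0 : dvX v0 ('X^v0 : {poly K}) by move=> i hi; rewrite coefXn (ltn_eqF hi).
have dY : dvX v0 Y.
  move=> i hi; rewrite hY !coefD !coefXn hra1.
    rewrite (ltn_eqF (leq_trans hi v0v1)) (ltn_eqF (leq_trans hi (leq_trans v0v1 (ltnW v1lam)))).
    by rewrite /= !addr0.
  exact: (ltnW (leq_trans hi (leq_trans v0v1 (ltnW v1lam)))).
have C7 : dvX v0 GY.
  case: hg => a [b eg]; rewrite /GY eg /eval2.
  change (dvX v0 (map_poly (comp_poly 'X^v0) (a * ('X%:P) ^+ 2 + b * 'X)).[Y]).
  rewrite evalXY /= comp_polyX.
  apply: dvX_add; apply: dvX_mull => //.
  by rewrite expr2; apply: (dvX_le (m := v0 + v0)); [exact: leq_addr| exact: dvX_mul].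
have C8 : dvX (v0.-1) yp.
  apply: dvX_deriv => i hi; rewrite /y jet_coef ?dY //.
  exact: ltnW (leq_trans hi (ltnW v0k)).
have C9 : dvX (v0.-1) xp by apply: dvX_deriv.
have E : (v0.-1 + k.+1)%N = (k + v0)%N by rewrite addnS -addSn prednK // addnC.
have S1 : cg (k + v0) (xp * D) (xp * (yp * eps + Hy)) by rewrite -E; exact: cg_mull C9 C2.
have I : xp * (yp * eps + Hy) = yp * (xp * eps + Gy) + (xp * Hy - yp * Gy).
  rewrite !mulrDr mulrCA -addrA; congr (_ + _).
  by rewrite addrCA subrr addr0.
have S2 : cg (k + v0) (yp * (xp * eps + Gy) + (xp * Hy - yp * Gy)) (xp * Hy - yp * Gy).
  by rewrite addrC; apply: dvX_cg0; rewrite -E; exact: dvX_mul C8 C1.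
have S3 : cg (k + v0) (xp * Hy) (xp * HY) by rewrite -E; exact: cg_mull C9 C4.
have S4 : cg (k + v0) (yp * Gy) (yp * GY) by rewrite -E; exact: cg_mull C8 C5.
have S5 : cg (k + v0) (yp * GY) (Y^`() * GY).
  by rewrite /cg -mulrBl; exact: dvX_mul C6 C7.
have S : cg (k + v0) (xp * D) (xp * HY - Y^`() * GY).
  apply: cg_trans S1 _; rewrite I; apply: cg_trans S2 _.
  apply: cg_add S3 (cg_opp (cg_trans S4 S5)).
set w := HY * xp + eval2 (- g) 'X^v0 Y * Y^`().
have ew : w = xp * HY - Y^`() * GY.
  rewrite /w /GY /eval2.
  change ((map_poly (comp_poly 'X^v0) h).[Y] * xp + (map_poly (comp_poly 'X^v0) (- g)).[Y] * Y^`()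
     = xp * HY - Y^`() * (map_poly (comp_poly 'X^v0) g).[Y]).
  by rewrite rmorphN hornerN mulNr mulrC [Y^`() * _]mulrC.
have Sw : cg (k + v0) w (xp * D) by rewrite ew; exact: cg_sym S.
have hxpD : forall i, (xp * D)`_i = (if (i < v0.-1)%N then 0 else D`_(i - v0.-1)) *+ v0.
  by move=> i; rewrite /xp derivXn mulrnAl mulrC coefMn coefMXn.
have jN : (j + v0.-1 < k + v0)%N by rewrite -addnS prednK // leq_add2r -ltnS.
have wc : forall i, (i < k + v0)%N -> w`_i = (xp * D)`_i.
  by move=> i hi; apply/eqP; rewrite -subr_eq0 -coefB Sw.
have wj : w`_(j + v0.-1) != 0.
  rewrite wc // hxpD ltnNge leq_addl /= addnK mulrn_eq0 negb_or hDj andbT.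
  by rewrite -lt0n.
have ojw : ordt w = (j + v0.-1)%N.
  apply: ordt_eq => // i hi; rewrite wc ?hxpD; last by apply: ltn_trans hi jN.
  case: ifP => hiv; first by rewrite mul0rn.
  rewrite hDb ?mul0rn //.
  rewrite ltn_subLR; first by rewrite addnC.
  by rewrite leqNgt hiv.
have wn0 : w != 0 by apply: contraNneq wj => ->; rewrite coef0.
have LL : Lambda (j + v0)%N.
  apply/hLa; exists h, (- g); rewrite ha1 -/Y -/xp; split => //.
  by rewrite -/w ojw -addnS prednK.
have eD : D = jet k psi.2 - y by rewrite hJ2 addrC addKr.
move: hDj; rewrite eD coefB /y !jet_coef // hP hY !coefD (hrp2 _ LL) (hra2 _ LL) !addr0 subrr eqxx //.
Qed.
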